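(* Let $S$ be a specialisation independent scheduling rule, $G$ a p-goal and $\phi$ a substitution. If there is a p-SLD derivation $G\xrightarrow{S,X,\theta}\cdot$ via $S$ with template $X$ and composed mgu $\theta$ (the composition of the mgus of its steps), then there is a p-SLD derivation $G\theta\phi\xrightarrow{S,X}\cdot$ via $S$ with the same template $X$.
   Context: A p-atom is a pair $a[p]$ of an atom $a$ and a rational priority $p$. A p-goal is a finite set of p-atoms with pairwise distinct priorities, regarded as a list ordered by increasing priority. Substitutions act on atoms and leave priorities unchanged. A clause is $h\leftarrow B$ with $h$ an atom and $B$ a p-goal. For p-goals with no common priority, $F+G=F\cup G$; $F|G$ denotes $F+G$ when all priorities of $F$ are smaller than those of $G$. A shifting $\underline{\pi}$ is a strictly increasing bijection $\mathbb{Q}\to\mathbb{Q}$ acting on priorities. Priority derivation step: for a p-goal $a|F$ ($a$ of least priority), clause $c=(h\leftarrow B)$, renaming $\xi$ with $var(a|F)\cap var(c\xi)=\emptyset$, idempotent relevant mgu $\theta$ of $a$ and $h\xi$, shifting $\underline{\pi}$ with $F$, $B\xi\underline{\pi}$ sharing no priority: $a|F\xrightarrow{c\xi,\theta}(F+B\xi\underline{\pi})\theta$. A p-SLD derivation $G_0\xrightarrow{c_0\xi_0,\theta_0}G_1\cdots\xrightarrow{c_{k}\xi_{k},\theta_{k}}G_{k+1}$ is a sequence of such steps with each renamed clause variable-disjoint from $G_0$ and all earlier renamed clauses; its template is $c_0,\dots,c_k$ and it is written $G_0\xrightarrow{M,\theta}G_{k+1}$ with $\theta=\theta_0\cdots\theta_k$;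 it is via $S$ if all steps lie in $S$. Lowering: for $c=(h\leftarrow B)$, a step $a\lambda\underline{\sigma}|(K\lambda\underline{\sigma}+X)\xrightarrow{c}(X+K\lambda\underline{\sigma}+B\xi''\underline{\theta}'')\alpha''$ is a lowering by $X$ of $a|K\xrightarrow{c}(K+B\xi'\underline{\theta}')\alpha'$ ($\lambda$ a substitution, $\underline\sigma$ a shifting); a congruent lowering if some shifting $\underline{\rho}$ has $K\underline{\rho}=K\underline{\sigma}$ and $B\underline{\theta}'\underline{\rho}=B\underline{\theta}''$. Steps are congruent lowerings of each other if each is a congruent lowering of the other. A set $S$ of steps is complete if (i) whenever some step $G\xrightarrow{c}\cdot$ exists, some step $G\xrightarrow{c}\cdot$ lies in $S$, and (ii) $S$ contains every step that is a congruent lowering of each other with a step of $S$; it is specialisation independent if whenever $Ds_1,Ds_2\in S$ and $Ds_2$ is a lowering of $Ds_1$ by $X$, $Ds_2$ is a congruent lowering of $Ds_1$ by $X$. A specialisation independent scheduling rule is a complete specialisation independent set of steps. *)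

(* Defs.v *)
From Stdlib Require List Permutation.
From mathcomp Require Import all_boot all_order all_algebra.

Set Implicit Arguments.
Unset Strict Implicit.
Unset Printing Implicit Defensive.

Inductive term : Type :=
| Var (x : nat)
| Fun (f : nat) (args : list term).

Record atom : Type := Atom { apred : nat; aargs : list term }.

Definition subst := nat -> term.

Fixpoint tsubst (s : subst) (t : term) : term :=
  match t with
  | Var x => s x
  | Fun f ts => Fun f (List.map (tsubst s) ts)
  end.

Definition asubst (s : subst) (a : atom) : atom :=
  Atom (apred a) (List.map (tsubst s) (aargs a)).

(* composition [s1 s2]: first apply s1, then s2 (x(s1 s2) = (x s1) s2) *)
Definition scomp (s1 s2 : subst) : subst := fun x => tsubst s2 (s1 x).

Definition sid : subst := Var.

Fixpoint tvars (t : term) : list nat :=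
  match t with
  | Var x => x :: nil
  | Fun _ ts => List.flat_map tvars ts
  end.

Definition avars (a : atom) : list nat := List.flat_map tvars (aargs a).

Definition disjointL (l1 l2 : list nat) : Prop :=
  forall x, List.In x l1 -> ~ List.In x l2.

Definition unifier (th : subst) (a b : atom) : Prop := asubst th a = asubst th b.

Definition mgu (th : subst) (a b : atom) : Prop :=
  unifier th a b /\
  forall s, unifier s a b -> exists d, forall x, s x = tsubst d (th x).

Definition idempotent (th : subst) : Prop :=
  forall x, tsubst th (th x) = th x.

(* var(th) = dom(th) \cup range(th) is contained in var(a) \cup var(b) *)
Definition relevant (th : subst) (a b : atom) : Prop :=
  forall x, th x <> Var x ->
    List.In x (avars a ++ avars b) /\
    (forall y, List.In y (tvars (th x)) -> List.In y (avars a ++ avars b)).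

Definition renaming (xi : subst) : Prop :=
  (forall x, exists y, xi x = Var y) /\
  (forall x y, xi x = xi y -> x = y) /\
  (forall y, exists x, xi x = Var y).

Definition patom := (atom * rat)%type.

(* a p-goal is represented as the list of its p-atoms ordered by strictly
   increasing priority (so priorities are pairwise distinct) *)
Definition pgoal := list patom.

Definition wf_pgoal (G : pgoal) : Prop :=
  sorted (fun u v : patom => (u.2 < v.2)%R) G.

Definition prios (G : pgoal) : list rat := List.map snd G.

Definition pgvars (G : pgoal) : list nat := List.flat_map (fun u => avars u.1) G.

Definition psubst (s : subst) (G : pgoal) : pgoal :=
  List.map (fun u => (asubst s u.1, u.2)) G.

Definition pshift (pi : rat -> rat) (G : pgoal) : pgoal :=
  List.map (fun u => (u.1, pi u.2)) G.

Definition no_common_prio (F G : pgoal) : Prop :=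
  forall q, List.In q (prios F) -> ~ List.In q (prios G).

(* [psum F G H] : H = F + G (= F \cup G), for p-goals F, G without
   common priority *)
Definition psum (F G H : pgoal) : Prop :=
  wf_pgoal F /\ wf_pgoal G /\ no_common_prio F G /\
  wf_pgoal H /\ Permutation.Permutation (F ++ G) H.

Definition shifting (pi : rat -> rat) : Prop :=
  (forall x y : rat, (x < y)%R -> (pi x < pi y)%R) /\ bijective pi.

Record clause : Type := Clause { chead : atom; cbody : pgoal }.

(* a step  G --(c xi, th)--> R  using the shifting pi *)
Record step : Type := Step {
  st_goal : pgoal;
  st_clause : clause;
  st_ren : subst;
  st_mgu : subst;
  st_shift : rat -> rat;
  st_res : pgoal }.

Definition rcvars (d : step) : list nat :=
  avars (asubst (st_ren d) (chead (st_clause d))) ++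
  pgvars (psubst (st_ren d) (cbody (st_clause d))).

Definition is_step (d : step) : Prop :=
  exists (a : atom) (p : rat) (F : pgoal),
    st_goal d = (a, p) :: F /\
    wf_pgoal (st_goal d) /\
    wf_pgoal (cbody (st_clause d)) /\
    renaming (st_ren d) /\
    disjointL (pgvars (st_goal d)) (rcvars d) /\
    idempotent (st_mgu d) /\
    relevant (st_mgu d) a (asubst (st_ren d) (chead (st_clause d))) /\
    mgu (st_mgu d) a (asubst (st_ren d) (chead (st_clause d))) /\
    shifting (st_shift d) /\
    exists H : pgoal,
      psum F (pshift (st_shift d) (psubst (st_ren d) (cbody (st_clause d)))) H /\
      st_res d = psubst (st_mgu d) H.

Fixpoint chain (G : pgoal) (ds : list step) : Prop :=
  match ds with
  | nil => True
  | d :: ds' => st_goal d = G /\ chain (st_res d) ds'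
  end.

(* each renamed clause is variable-disjoint from G0 and from all earlier
   renamed clauses; [seen] accumulates these variables *)
Fixpoint fresh_ok (seen : list nat) (ds : list step) : Prop :=
  match ds with
  | nil => True
  | d :: ds' => disjointL (rcvars d) seen /\ fresh_ok (seen ++ rcvars d) ds'
  end.

Definition pderivation (G0 : pgoal) (ds : list step) : Prop :=
  ds <> nil /\ List.Forall is_step ds /\ chain G0 ds /\ fresh_ok (pgvars G0) ds.

Definition template (ds : list step) : list clause := List.map st_clause ds.

Definition composed_mgu (ds : list step) : subst :=
  List.fold_right (fun d acc => scomp (st_mgu d) acc) sid ds.

Definition via (S : step -> Prop) (ds : list step) : Prop := List.Forall S ds.

Definition lowering_with (d1 d2 : step) (X : pgoal) (lam : subst)
    (sig : rat -> rat) (K : pgoal) : Prop :=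
  is_step d1 /\ is_step d2 /\ st_clause d2 = st_clause d1 /\ shifting sig /\
  exists (a : atom) (p : rat) (KX : pgoal),
    st_goal d1 = (a, p) :: K /\
    psum (pshift sig (psubst lam K)) X KX /\
    st_goal d2 = (asubst lam a, sig p) :: KX.

Definition lowering (d1 d2 : step) (X : pgoal) : Prop :=
  exists lam sig K, lowering_with d1 d2 X lam sig K.

Definition cong_lowering (d1 d2 : step) (X : pgoal) : Prop :=
  exists lam sig K, lowering_with d1 d2 X lam sig K /\
    exists rho, shifting rho /\
      pshift rho K = pshift sig K /\
      pshift rho (pshift (st_shift d1) (cbody (st_clause d1)))
        = pshift (st_shift d2) (cbody (st_clause d1)).

Definition mutual_cong_lowering (d1 d2 : step) : Prop :=
  (exists X, cong_lowering d1 d2 X) /\ (exists X, cong_lowering d2 d1 X).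

Definition complete (S : step -> Prop) : Prop :=
  (forall d, S d -> is_step d) /\
  (forall d, is_step d -> exists d', S d' /\
      st_goal d' = st_goal d /\ st_clause d' = st_clause d) /\
  (forall d d', S d -> is_step d' -> mutual_cong_lowering d d' -> S d').

Definition spec_independent (S : step -> Prop) : Prop :=
  forall d1 d2 X, S d1 -> S d2 -> lowering d1 d2 X -> cong_lowering d1 d2 X.

Definition si_scheduling_rule (S : step -> Prop) : Prop :=
  complete S /\ spec_independent S.

(* Main.v *)
Require Import Defs.
From Stdlib Require Import List Permutation Lia Classical_Prop.
From mathcomp Require Import all_boot all_order all_algebra zify.
Import Defs.

Set Implicit Arguments.
Unset Strict Implicit.

Section TermInd.
Variable P : term -> Prop.
Hypothesis HV : forall x, P (Var x).
Hypothesis HF : forall f ts, List.Forall P ts -> P (Fun f ts).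
Fixpoint term_ind2 (t : term) : P t :=
  match t with
  | Var x => HV x
  | Fun f ts => HF f ((fix go (l : list term) : List.Forall P l :=
       match l with nil => List.Forall_nil _ | u :: l' => List.Forall_cons _ (term_ind2 u) (go l') end) ts)
  end.
End TermInd.

Lemma tsubst_comp s1 s2 t : tsubst s2 (tsubst s1 t) = tsubst (scomp s1 s2) t.
Proof.
induction t using term_ind2; simpl; auto.
f_equal. rewrite List.map_map. induction H; simpl; auto. f_equal; auto.
Qed.

Lemma tsubst_ext s1 s2 t : (forall x, List.In x (tvars t) -> s1 x = s2 x) -> tsubst s1 t = tsubst s2 t.
Proof.
induction t using term_ind2; simpl; intros E.
- apply E; auto.
- f_equal. induction H; simpl; auto. simpl in E. f_equal.
  + apply H; intros; apply E; apply List.in_or_app; auto.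
  + apply IHForall; intros; apply E; apply List.in_or_app; auto.
Qed.

Lemma tsubst_eq_vars s1 s2 t : tsubst s1 t = tsubst s2 t -> forall x, List.In x (tvars t) -> s1 x = s2 x.
Proof.
induction t using term_ind2; simpl; intros E y Hy.
- destruct Hy as [->|[]]; auto.
- injection E as E. induction H; simpl in *. contradiction.
  injection E as E1 E2. apply List.in_app_or in Hy as [Hy|Hy]; eauto.
Qed.

Lemma tvars_tsubst s t y : List.In y (tvars (tsubst s t)) <-> exists x, List.In x (tvars t) /\ List.In y (tvars (s x)).
Proof.
induction t using term_ind2; simpl.
- split. intros; exists x; auto. intros [z [[->|[]] H]]; auto.
- induction H; simpl. split. tauto. intros [z [[] _]].
  rewrite List.in_app_iff IHForall H. split.
  + intros [[z [A B]]|[z [A B]]]; exists z; rewrite List.in_app_iff; auto.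
  + intros [z [A B]]. apply List.in_app_or in A as [A|A]; eauto.
Qed.

Lemma tsubst_sid t : tsubst sid t = t.
Proof.
induction t using term_ind2; simpl; auto. f_equal. induction H; simpl; auto. f_equal; auto.
Qed.

Fixpoint tsize (t : term) : nat :=
  match t with Var _ => 1 | Fun _ ts => S (List.fold_right (fun u n => tsize u + n) 0 ts) end.

Lemma tsize_pos t : 0 < tsize t.
Proof. destruct t; simpl; lia. Qed.


Lemma fold_le u ts : List.In u ts -> tsize u <= List.fold_right (fun u n => tsize u + n) 0 ts.
Proof. induction ts as [|a ts IH]; simpl; [tauto|]. intros [->|H]; [lia|]. specialize (IH H); lia. Qed.

Lemma occurs_le s x t : List.In x (tvars t) -> tsize (s x) <= tsize (tsubst s t).
Proof.
induction t using term_ind2; simpl; intros Hin.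
- destruct Hin as [->|[]]; lia.
- apply List.in_flat_map in Hin as [u [Hu Hx]].
  rewrite List.Forall_forall in H. specialize (H u Hu Hx).
  enough (tsize (tsubst s u) <= List.fold_right (fun u n => tsize u + n) 0 (List.map (tsubst s) ts)) by lia.
  apply fold_le. apply List.in_map; auto.
Qed.

Lemma occurs_lt s x f ts : List.In x (tvars (Fun f ts)) -> tsize (s x) < tsize (tsubst s (Fun f ts)).
Proof.
simpl; intros Hin.
apply List.in_flat_map in Hin as [u [Hu Hx]].
pose proof (occurs_le s Hx).
enough (tsize (tsubst s u) <= List.fold_right (fun u n => tsize u + n) 0 (List.map (tsubst s) ts)) by lia.
apply fold_le. apply List.in_map; auto.
Qed.

Lemma In_mem (x : nat) (l : list nat) : List.In x l <-> x \in l.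
Proof.
induction l as [|a l IH]; simpl. split; [tauto|by []].
rewrite in_cons IH. split.
- intros [->|H]. by rewrite eqxx. by rewrite H orbT.
- case/orP. move/eqP=> ->; auto. auto.
Qed.

Notation eqn := (term * term)%type.
Definition evars (E : list eqn) : list nat := List.flat_map (fun e => tvars e.1 ++ tvars e.2) E.
Definition unifE (s : subst) (E : list eqn) : Prop := forall e, List.In e E -> tsubst s e.1 = tsubst s e.2.
Definition esize (E : list eqn) : nat := List.fold_right (fun e n => tsize e.1 + tsize e.2 + n) 0 E.
Definition nv (E : list eqn) : nat := size (undup (evars E)).

Definition Good (E : list eqn) (th : subst) : Prop :=
  unifE th E /\ (forall s, unifE s E -> exists d, forall x, s x = tsubst d (th x)) /\
  idempotent th /\
  (forall x, th x <> Var x -> List.In x (evars E) /\ forall y, List.In y (tvars (th x)) -> List.In y (evars E)).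

Lemma Good_transfer E E' th : (forall s, unifE s E <-> unifE s E') ->
  (forall x, List.In x (evars E') -> List.In x (evars E)) -> Good E' th -> Good E th.
Proof.
intros Hu Hv [A [B [C D]]]. split; [|split; [|split]].
- apply Hu; auto.
- intros s Hs; apply B; apply Hu; auto.
- auto.
- intros x Hx; destruct (D x Hx); split; auto.
Qed.

Lemma nv_incl E1 E2 : (forall x, List.In x (evars E1) -> List.In x (evars E2)) -> nv E1 <= nv E2.
Proof.
intros H. unfold nv. apply uniq_leq_size. apply undup_uniq.
intros y. rewrite !mem_undup. intros Hy; apply In_mem, H, In_mem; auto.
Qed.

Lemma nv_lt E1 E2 x : (forall y, List.In y (evars E1) -> List.In y (evars E2) /\ y <> x) ->
  List.In x (evars E2) -> nv E1 < nv E2.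
Proof.
intros H Hx. unfold nv.
have Hx' : x \in undup (evars E2) by rewrite mem_undup; apply In_mem.
have Hle : size (undup (evars E1)) <= size (rem x (undup (evars E2))).
{ apply uniq_leq_size. apply undup_uniq.
  intros y. rewrite mem_undup (mem_rem_uniq _ (undup_uniq _)) !inE mem_undup.
  intros Hy. destruct (H y (proj2 (In_mem _ _) Hy)) as [A B].
  apply/andP; split. apply/eqP; auto. apply In_mem; auto. }
rewrite size_rem in Hle; auto.
have : 0 < size (undup (evars E2)) by destruct (undup (evars E2)); [discriminate|].
lia.
Qed.

Lemma esize_cons e E : esize (e :: E) = tsize e.1 + tsize e.2 + esize E.
Proof. reflexivity. Qed.

Lemma evars_cons e E x : List.In x (evars (e :: E)) <-> List.In x (tvars e.1) \/ List.In x (tvars e.2) \/ List.In x (evars E).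
Proof. simpl. rewrite !List.in_app_iff. tauto. Qed.

Lemma unifE_cons s e E : unifE s (e :: E) <-> tsubst s e.1 = tsubst s e.2 /\ unifE s E.
Proof.
unfold unifE; simpl; split.
- intros H; split; auto.
- intros [A B] e' [<-|H]; auto.
Qed.

Lemma Good_nil : Good nil sid.
Proof.
split; [|split; [|split]].
- intros e [].
- intros s _; exists s; intros x; reflexivity.
- intros x; reflexivity.
- intros x H; exfalso; apply H; reflexivity.
Qed.

Definition sgl (x : nat) (t : term) : subst := fun y => if y == x then t else Var y.

Lemma tsubst_var_id s t : (forall y, List.In y (tvars t) -> s y = Var y) -> tsubst s t = t.
Proof. intros H. rewrite -{2}(tsubst_sid t). apply tsubst_ext; auto. Qed.

Lemma elim_step x t E :
  ~ List.In x (tvars t) ->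
  let E1 := List.map (fun e => (tsubst (sgl x t) e.1, tsubst (sgl x t) e.2)) E in
  (forall s, unifE s E1 -> exists th1, Good E1 th1) ->
  forall s, unifE s ((Var x, t) :: E) -> exists th, Good ((Var x, t) :: E) th.
Proof.
intros Hx E1 IH s Hs.
set sg := sgl x t.
have Hsg : forall s', s' x = tsubst s' t -> forall u, tsubst s' (tsubst sg u) = tsubst s' u.
{ intros s' Hs' u. rewrite tsubst_comp. apply tsubst_ext. intros y _.
  unfold scomp, sg, sgl. destruct (y == x) eqn:E0; simpl; auto. move/eqP: E0 => ->; auto. }
have HuE1 : forall s', unifE s' ((Var x, t) :: E) -> unifE s' E1.
{ intros s' H'. apply unifE_cons in H' as [H1 H2]. simpl in H1.
  intros e He. unfold E1 in He. apply List.in_map_iff in He as [e0 [<- He0]]. simpl.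
  rewrite !Hsg; auto. }
have HvE1 : forall y, List.In y (evars E1) -> List.In y (evars ((Var x, t) :: E)) /\ y <> x.
{ intros y Hy. unfold E1, evars in Hy. apply List.in_flat_map in Hy as [e [He Hy]].
  apply List.in_map_iff in He as [e0 [<- He0]]. simpl in Hy.
  have key : forall u, List.In u (e0.1 :: e0.2 :: nil) -> List.In y (tvars (tsubst sg u)) ->
     List.In y (evars ((Var x, t) :: E)) /\ y <> x.
  { intros u Hu Hy'. apply tvars_tsubst in Hy' as [z [Hz Hyz]].
    unfold sg, sgl in Hyz. destruct (z == x) eqn:E0.
    - split. apply evars_cons; simpl; auto. intros ->; auto.
    - simpl in Hyz. destruct Hyz as [->|[]]. split.
      + apply evars_cons. right; right. unfold evars. apply List.in_flat_map. exists e0; split; auto.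
        apply List.in_app_iff. destruct Hu as [<-|[<-|[]]]; auto.
      + intros ->. by rewrite eqxx in E0. }
  apply List.in_app_or in Hy as [Hy|Hy]; eapply key; eauto; simpl; auto. }
destruct (IH s (HuE1 s Hs)) as [th1 [G1 [G2 [G3 G4]]]].
have th1x : th1 x = Var x.
{ destruct (Classical_Prop.classic (th1 x = Var x)) as [E0|E0]; auto.
  exfalso. have := G4 x. intros H. destruct (H E0) as [A _].
  destruct (HvE1 x A); auto. }
have Hvars_th1 : forall z w, z <> x -> List.In w (tvars (th1 z)) -> w <> x.
{ intros z w Hz Hw. destruct (Classical_Prop.classic (th1 z = Var z)) as [E0|E0].
  - rewrite E0 in Hw. destruct Hw as [->|[]]; auto.
  - destruct (G4 z E0) as [_ B]. destruct (HvE1 w (B w Hw)); auto. }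
exists (scomp sg th1). split; [|split; [|split]].
- apply unifE_cons; split.
  + simpl. unfold scomp, sg, sgl. rewrite eqxx. rewrite -tsubst_comp.
    f_equal. symmetry. apply tsubst_var_id. intros y Hy. unfold sgl.
    destruct (y == x) eqn:E0; auto. move/eqP: E0 => E0; subst; contradiction.
  + intros e He. rewrite -!tsubst_comp. apply (G1 (tsubst sg e.1, tsubst sg e.2)).
    unfold E1. apply List.in_map_iff. exists e; auto.
- intros s' Hs'. destruct (G2 s' (HuE1 s' Hs')) as [d Hd]. exists d. intros y.
  unfold scomp. rewrite tsubst_comp.
  have -> : tsubst (scomp th1 d) (sg y) = tsubst s' (sg y).
  { apply tsubst_ext. intros z _. unfold scomp. rewrite Hd; auto. }
  unfold sg, sgl. destruct (y == x) eqn:E0; simpl; auto.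
  apply unifE_cons in Hs' as [H1 _]. move/eqP: E0 => ->. simpl in H1; auto.
- intros y. unfold scomp. rewrite tsubst_comp. apply tsubst_ext.
  intros z Hz. unfold scomp.
  have Hzx : z <> x.
  { unfold sg, sgl in Hz. destruct (y == x) eqn:E0.
    - intros ->; contradiction.
    - destruct Hz as [<-|[]]. intros ->. by rewrite eqxx in E0. }
  transitivity (tsubst th1 (th1 z)); [|apply G3].
  apply tsubst_ext. intros w Hw. unfold sg, sgl. destruct (w == x) eqn:E0; auto.
  move/eqP: E0 => E0. exfalso. eapply Hvars_th1; eauto.
- intros y Hy. unfold scomp in *. unfold sg, sgl in *. destruct (y == x) eqn:E0.
  + move/eqP: E0 => ->. split. apply evars_cons; simpl; auto.
    intros w Hw. apply tvars_tsubst in Hw as [z [Hz Hw]].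
    destruct (Classical_Prop.classic (th1 z = Var z)) as [E1'|E1'].
    * rewrite E1' in Hw. destruct Hw as [->|[]]. apply evars_cons; simpl; auto.
    * destruct (G4 z E1') as [_ B]. apply HvE1; auto.
  + simpl in Hy. destruct (G4 y Hy) as [A B]. split. apply HvE1; auto.
    intros w Hw. apply HvE1; auto.
Qed.

Lemma elim_vars x t E y :
  List.In y (evars (List.map (fun e => (tsubst (sgl x t) e.1, tsubst (sgl x t) e.2)) E)) ->
  ~ List.In x (tvars t) ->
  List.In y (evars ((Var x, t) :: E)) /\ y <> x.
Proof.
intros Hy Hx. unfold evars in Hy. apply List.in_flat_map in Hy as [e [He Hy]].
apply List.in_map_iff in He as [e0 [<- He0]]. simpl in Hy.
have key : forall u, List.In u (e0.1 :: e0.2 :: nil) -> List.In y (tvars (tsubst (sgl x t) u)) ->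
   List.In y (evars ((Var x, t) :: E)) /\ y <> x.
{ intros u Hu Hy'. apply tvars_tsubst in Hy' as [z [Hz Hyz]].
  unfold sgl in Hyz. destruct (z == x) eqn:E0.
  - split. apply evars_cons; simpl; auto. intros ->; auto.
  - simpl in Hyz. destruct Hyz as [->|[]]. split.
    + apply evars_cons. right; right. unfold evars. apply List.in_flat_map. exists e0; split; auto.
      apply List.in_app_iff. destruct Hu as [<-|[<-|[]]]; auto.
    + intros ->. by rewrite eqxx in E0. }
apply List.in_app_or in Hy as [Hy|Hy]; eapply key; eauto; simpl; auto.
Qed.

Lemma elim_full x t E :
  ~ List.In x (tvars t) ->
  (forall E1, nv E1 < nv ((Var x, t) :: E) -> forall s, unifE s E1 -> exists th, Good E1 th) ->
  forall s, unifE s ((Var x, t) :: E) -> exists th, Good ((Var x, t) :: E) th.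
Proof.
intros Hx IH. apply elim_step; auto. intros s Hs. apply (IH _ ) with s; auto.
apply nv_lt with x. intros y Hy; apply elim_vars; auto.
apply evars_cons; simpl; auto.
Qed.

Lemma combine_unif s ts us : length ts = length us ->
  (List.map (tsubst s) ts = List.map (tsubst s) us <->
   forall e, List.In e (List.combine ts us) -> tsubst s e.1 = tsubst s e.2).
Proof.
revert us; induction ts as [|a ts IH]; intros [|b us] Hl; simpl in *; try discriminate.
- split; auto. intros _ e [].
- injection Hl as Hl. split.
  + intros H; injection H as H1 H2. intros e [<-|He]; auto. apply (IH us Hl); auto.
  + intros H. f_equal. apply (H (a,b)); auto. apply (IH us Hl). intros; apply H; auto.
Qed.

Lemma combine_vars ts us x : length ts = length us ->
  (List.In x (evars (List.combine ts us)) <-> List.In x (List.flat_map tvars ts) \/ List.In x (List.flat_map tvars us)).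
Proof.
revert us; induction ts as [|a ts IH]; intros [|b us] Hl; simpl in *; try discriminate.
- tauto.
- injection Hl as Hl. rewrite !List.in_app_iff. specialize (IH us Hl). unfold evars in IH. rewrite IH. tauto.
Qed.

Lemma combine_size ts us : length ts = length us ->
  esize (List.combine ts us) = List.fold_right (fun u n => tsize u + n) 0 ts + List.fold_right (fun u n => tsize u + n) 0 us.
Proof.
revert us; induction ts as [|a ts IH]; intros [|b us] Hl; simpl in *; try discriminate; auto.
injection Hl as Hl. rewrite (IH us Hl). lia.
Qed.

Lemma esize_app E1 E2 : esize (E1 ++ E2) = esize E1 + esize E2.
Proof. induction E1; simpl; auto. rewrite IHE1. lia. Qed.

Lemma evars_app E1 E2 x : List.In x (evars (E1 ++ E2)) <-> List.In x (evars E1) \/ List.In x (evars E2).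
Proof. unfold evars. rewrite List.flat_map_app List.in_app_iff. tauto. Qed.

Lemma unifE_app s E1 E2 : unifE s (E1 ++ E2) <-> unifE s E1 /\ unifE s E2.
Proof.
unfold unifE. split.
- intros H; split; intros; apply H; apply List.in_or_app; auto.
- intros [A B] e He. apply List.in_app_or in He as [He|He]; auto.
Qed.

Lemma unify_aux : forall n m E s, nv E <= n -> esize E <= m -> unifE s E -> exists th, Good E th.
Proof.
intros n. induction n as [n IHn] using Wf_nat.lt_wf_ind.
intros m. induction m as [m IHm] using Wf_nat.lt_wf_ind.
intros E s Hn Hm Hs.
have Elim : forall x t E', E = (Var x, t) :: E' -> ~ List.In x (tvars t) -> exists th, Good E th.
{ intros x t E' -> Hx. apply (elim_full Hx) with s; auto. intros E1 Hlt s1 Hs1.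
  apply (IHn (nv E1)) with (esize E1) s1; auto. lia. }
destruct E as [|[l r] E'].
{ exists sid; apply Good_nil. }
have Hsz : forall u, 0 < tsize u := tsize_pos.
destruct l as [x|f ts]; destruct r as [y|g us].
- destruct (PeanoNat.Nat.eq_dec x y) as [<-|Hxy].
  + destruct (IHm (esize E') ltac:(rewrite esize_cons in Hm; simpl in Hm; lia) E' s) as [th Hth].
    * have : nv E' <= nv ((Var x, Var x) :: E') by apply nv_incl; intros z Hz; apply evars_cons; auto.
      move=> H0; exact: (leq_trans H0 Hn).
    * auto.
    * apply unifE_cons in Hs; tauto.
    * exists th. eapply Good_transfer; [|intros z Hz; apply evars_cons; right; right; exact Hz|exact Hth].
      intros s'. rewrite unifE_cons. simpl. tauto.
  + apply (Elim x (Var y) E'); auto. simpl. intuition.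
- destruct (List.in_dec PeanoNat.Nat.eq_dec x (tvars (Fun g us))) as [Hin|Hnin].
  + exfalso. apply unifE_cons in Hs as [H1 _]. simpl in H1.
    have H := occurs_lt s Hin. change (tsubst s (Fun g us)) with (Fun g (List.map (tsubst s) us)) in H.
    rewrite -H1 in H. lia.
  + apply (Elim x (Fun g us) E'); auto.
- destruct (List.in_dec PeanoNat.Nat.eq_dec y (tvars (Fun f ts))) as [Hin|Hnin].
  + exfalso. apply unifE_cons in Hs as [H1 _]. simpl in H1.
    have H := occurs_lt s Hin. change (tsubst s (Fun f ts)) with (Fun f (List.map (tsubst s) ts)) in H.
    rewrite H1 in H. lia.
  + destruct (elim_full (E := E') Hnin) with s as [th Hth].
    * intros E1 Hlt s1 Hs1. apply (IHn (nv E1)) with (esize E1) s1; auto.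
      have H : nv ((Var y, Fun f ts) :: E') <= nv ((Fun f ts, Var y) :: E').
      { apply nv_incl. intros z; rewrite !evars_cons; simpl; tauto. }
      apply/ltP. exact: (leq_trans Hlt (leq_trans H Hn)).
    * apply unifE_cons in Hs as [H1 H2]. apply unifE_cons; simpl in *; auto.
    * exists th. eapply Good_transfer; [| |exact Hth].
      intros s'; rewrite !unifE_cons; simpl; intuition.
      intros z; rewrite !evars_cons; simpl; tauto.
- have Hs' := Hs. apply unifE_cons in Hs' as [H1 H2]. simpl in H1. injection H1 as Hfg Hm'. subst g.
  have Hl : length ts = length us by rewrite -(List.map_length (tsubst s) ts) Hm' List.map_length.
  destruct (IHm (esize (List.combine ts us ++ E'))) with (List.combine ts us ++ E') s as [th Hth].
  + rewrite esize_app combine_size // . rewrite esize_cons in Hm. simpl in Hm. lia.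
  + enough (nv (List.combine ts us ++ E') <= nv ((Fun f ts, Fun f us) :: E')) by lia.
    apply nv_incl. intros z Hz. apply evars_app in Hz. rewrite evars_cons. simpl.
    destruct Hz as [Hz|Hz]; [apply combine_vars in Hz; auto; tauto|auto].
  + by [].
  + apply unifE_app; split; auto. exact (proj1 (combine_unif s Hl) Hm').
  + exists th. eapply Good_transfer; [| |exact Hth].
    * intros s'. rewrite unifE_app unifE_cons. simpl. split.
      -- intros [A B]. injection A as A. split; auto. exact (proj1 (combine_unif s' Hl) A).
      -- intros [A B]. split; auto. f_equal; auto. exact (proj2 (combine_unif s' Hl) A).
    * intros z Hz. apply evars_app in Hz. rewrite evars_cons. simpl.
      destruct Hz as [Hz|Hz]; [apply combine_vars in Hz; auto; tauto|auto].
Qed.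

Lemma unify E s : unifE s E -> exists th, Good E th.
Proof. intros; eapply unify_aux; eauto. Qed.

Lemma atom_mgu a b s : unifier s a b -> exists th, mgu th a b /\ idempotent th /\ relevant th a b.
Proof.
destruct a as [pa la], b as [pb lb]. unfold unifier, asubst; simpl. intros Hs.
injection Hs as Hp Hl. subst pb.
have Hlen : length la = length lb by rewrite -(List.map_length (tsubst s) la) Hl List.map_length.
destruct (unify (E := List.combine la lb) (s := s)) as [th [G1 [G2 [G3 G4]]]].
{ exact (proj1 (combine_unif s Hlen) Hl). }
exists th. split; [split|split].
- unfold unifier, asubst; simpl. f_equal. exact (proj2 (combine_unif th Hlen) G1).
- intros s' Hs'. apply G2. unfold unifier, asubst in Hs'; simpl in Hs'. injection Hs' as Hs'.
  exact (proj1 (combine_unif s' Hlen) Hs').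
- exact G3.
- intros x Hx. destruct (G4 x Hx) as [A B]. unfold avars; simpl.
  split. apply combine_vars in A; auto. apply List.in_app_iff; auto.
  intros y Hy. specialize (B y Hy). apply combine_vars in B; auto. apply List.in_app_iff; auto.
Qed.

Lemma asubst_comp s1 s2 a : asubst s2 (asubst s1 a) = asubst (scomp s1 s2) a.
Proof. unfold asubst; simpl. f_equal. rewrite List.map_map. apply List.map_ext. intros; apply tsubst_comp. Qed.

Lemma asubst_ext s1 s2 a : (forall x, List.In x (avars a) -> s1 x = s2 x) -> asubst s1 a = asubst s2 a.
Proof.
intros H. unfold asubst. f_equal. apply List.map_ext_in. intros t Ht. apply tsubst_ext.
intros x Hx; apply H. unfold avars. apply List.in_flat_map; eauto.
Qed.

Lemma asubst_sid a : asubst sid a = a.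
Proof. destruct a as [p l]. unfold asubst; simpl. f_equal. rewrite -{2}(List.map_id l). apply List.map_ext. apply tsubst_sid. Qed.

Lemma avars_asubst s a y : List.In y (avars (asubst s a)) <-> exists x, List.In x (avars a) /\ List.In y (tvars (s x)).
Proof.
unfold avars, asubst; simpl. rewrite List.flat_map_concat_map List.map_map -List.flat_map_concat_map.
rewrite List.in_flat_map. split.
- intros [t [Ht Hy]]. apply tvars_tsubst in Hy as [x [Hx Hy]]. exists x; split; auto. apply List.in_flat_map; eauto.
- intros [x [Hx Hy]]. apply List.in_flat_map in Hx as [t [Ht Hx]]. exists t; split; auto. apply tvars_tsubst; eauto.
Qed.

Lemma psubst_comp s1 s2 G : psubst s2 (psubst s1 G) = psubst (scomp s1 s2) G.
Proof. unfold psubst. rewrite List.map_map. apply List.map_ext. intros [a q]; simpl. by rewrite asubst_comp. Qed.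

Lemma pgvars_cons u G x : List.In x (pgvars (u :: G)) <-> List.In x (avars u.1) \/ List.In x (pgvars G).
Proof. unfold pgvars; simpl. rewrite List.in_app_iff. tauto. Qed.

Lemma pgvars_app G1 G2 x : List.In x (pgvars (G1 ++ G2)) <-> List.In x (pgvars G1) \/ List.In x (pgvars G2).
Proof. unfold pgvars. rewrite List.flat_map_app List.in_app_iff. tauto. Qed.

Lemma psubst_ext s1 s2 G : (forall x, List.In x (pgvars G) -> s1 x = s2 x) -> psubst s1 G = psubst s2 G.
Proof.
induction G as [|[a q] G IH]; simpl; intros H; auto. f_equal.
- f_equal. apply asubst_ext. intros x Hx; apply H. apply List.in_app_iff; auto.
- apply IH. intros x Hx; apply H; apply List.in_app_iff; auto.
Qed.

Lemma psubst_sid G : psubst sid G = G.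
Proof. induction G as [|[a q] G IH]; simpl; auto. by rewrite asubst_sid IH. Qed.

Lemma pshift_id G : pshift id G = G.
Proof. induction G as [|[a q] G IH]; simpl; auto. by rewrite IH. Qed.

Lemma pshift_psubst f s G : pshift f (psubst s G) = psubst s (pshift f G).
Proof. induction G as [|[a q] G IH]; simpl; auto. by rewrite IH. Qed.

Lemma pshift_comp f g G : pshift f (pshift g G) = pshift (fun q => f (g q)) G.
Proof. induction G as [|[a q] G IH]; simpl; auto. by rewrite IH. Qed.

Lemma prios_psubst s G : prios (psubst s G) = prios G.
Proof. induction G as [|[a q] G IH]; simpl; auto. by rewrite IH. Qed.

Lemma prios_pshift f G : prios (pshift f G) = List.map f (prios G).
Proof. induction G as [|[a q] G IH]; simpl; auto. by rewrite IH. Qed.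

Lemma pshift_ext f g G : List.map f (prios G) = List.map g (prios G) -> pshift f G = pshift g G.
Proof.
induction G as [|[a q] G IH]; simpl; auto. intros H; injection H as H1 H2. by rewrite H1 IH.
Qed.

Lemma pgvars_psubst s G y : List.In y (pgvars (psubst s G)) <-> exists x, List.In x (pgvars G) /\ List.In y (tvars (s x)).
Proof.
induction G as [|[a q] G IH]; simpl. split. tauto. intros [x [[] _]].
rewrite !List.in_app_iff IH avars_asubst. split.
- intros [[x [A B]]|[x [A B]]]; exists x; rewrite List.in_app_iff; auto.
- intros [x [A B]]. apply List.in_app_or in A as [A|A]; eauto.
Qed.

Lemma pgvars_pshift f G : pgvars (pshift f G) = pgvars G.
Proof. induction G as [|[a q] G IH]; simpl; auto. unfold pgvars in *; simpl. by rewrite IH. Qed.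

Lemma pgvars_perm G H x : Permutation G H -> List.In x (pgvars G) -> List.In x (pgvars H).
Proof.
intros P. induction P; simpl; auto; unfold pgvars in *; simpl; rewrite ?List.in_app_iff; tauto.
Qed.

Lemma pshift_psubst_map f s G : pshift f (psubst s G) = List.map (fun u => (asubst s u.1, f u.2)) G.
Proof. unfold pshift, psubst. by rewrite List.map_map. Qed.

Definition incr (f : rat -> rat) := forall x y : rat, (x < y)%R -> (f x < f y)%R.

Lemma wf_map_gen (f : patom -> patom) G : (forall u v : patom, (u.2 < v.2)%R -> ((f u).2 < (f v).2)%R) ->
  wf_pgoal G -> wf_pgoal (List.map f G).
Proof.
intros Hf. unfold wf_pgoal. change (List.map f G) with (map f G). rewrite sorted_map.
apply sub_sorted. intros u v; apply Hf.
Qed.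

Lemma wf_pshift f G : incr f -> wf_pgoal G -> wf_pgoal (pshift f G).
Proof. intros Hf. apply wf_map_gen. intros u v; simpl; apply Hf. Qed.

Lemma wf_psubst s G : wf_pgoal G -> wf_pgoal (psubst s G).
Proof. apply wf_map_gen. auto. Qed.

Lemma wf_tail u G : wf_pgoal (u :: G) -> wf_pgoal G.
Proof. unfold wf_pgoal. apply path_sorted. Qed.

Lemma In_mem_gen (T : eqType) (x : T) (l : list T) : List.In x l <-> x \in l.
Proof.
induction l as [|a l IH]; simpl. split; [tauto|by []].
rewrite in_cons IH. split.
- intros [->|H]. by rewrite eqxx. by rewrite H orbT.
- case/orP. move/eqP=> ->; auto. auto.
Qed.

Lemma wf_prios_sorted G : wf_pgoal G -> sorted (fun x y : rat => (x < y)%R) (prios G).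
Proof. unfold wf_pgoal, prios. intros H. change (List.map snd G) with (map snd G). rewrite sorted_map. exact H. Qed.

Lemma wf_perm_prios G H : wf_pgoal G -> wf_pgoal H -> Permutation G H -> prios G = prios H.
Proof.
intros WG WH P. apply: Order.POrderTheory.lt_sorted_eq.
- exact (wf_prios_sorted WG).
- exact (wf_prios_sorted WH).
- intros q. apply/idP/idP; intros Hq; apply In_mem_gen; apply In_mem_gen in Hq; unfold prios in *.
  + eapply Permutation_in; [|exact Hq]. apply Permutation_map; auto.
  + eapply Permutation_in; [|exact Hq]. apply Permutation_map; symmetry; auto.
Qed.

Lemma incr_inj f : incr f -> forall x y, f x = f y -> x = y.
Proof.
intros Hf x y E. case: (Order.TotalTheory.ltgtP x y) => // H; have := Hf _ _ H; rewrite E Order.POrderTheory.ltxx //.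
Qed.

Lemma nc_map f F G : incr f -> no_common_prio F G -> no_common_prio (pshift f F) (pshift f G).
Proof.
intros Hf Hn q. rewrite !prios_pshift. intros A B.
apply List.in_map_iff in A as [x [<- Ax]]. apply List.in_map_iff in B as [y [Ey By]].
apply incr_inj in Ey; auto. subst. exact (Hn x Ax By).
Qed.

Definition kap (N : nat) : subst :=
  fun y => Var (if y < N then y + N else if y < N + N then y - N else y).

Lemma kap_lt N y : y < N -> kap N y = Var (y + N).
Proof. intros H. unfold kap. by rewrite H. Qed.

Lemma kap_back N y : y < N -> kap N (y + N) = Var y.
Proof.
intros H. unfold kap. have -> : (y + N < N) = false by apply/negbTE; rewrite -leqNgt; lia.
have -> : (y + N < N + N) = true by lia. f_equal; lia.
Qed.

Lemma kap_kap N y : tsubst (kap N) (kap N y) = Var y.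
Proof.
unfold kap at 2. case: ifP => H1.
- simpl. by rewrite kap_back.
- case: ifP => H2; simpl.
  + have -> : y = (y - N) + N by lia. rewrite kap_lt; [f_equal; lia|lia].
  + unfold kap. rewrite H1 H2. reflexivity.
Qed.

Lemma renaming_comp xi N : renaming xi -> renaming (fun x => tsubst (kap N) (xi x)).
Proof.
intros [R1 [R2 R3]]. split; [|split].
- intros x. destruct (R1 x) as [z ->]. simpl. unfold kap. eauto.
- intros x y E. apply R2. destruct (R1 x) as [z1 E1], (R1 y) as [z2 E2]. rewrite E1 E2 in E |- *.
  simpl in E. have := f_equal (tsubst (kap N)) E. rewrite !kap_kap. auto.
- intros y. destruct (R1 0) as [_ _]. unfold kap.
  set w := (if y < N then y + N else if y < N + N then y - N else y).
  destruct (R3 w) as [x Ex]. exists x. rewrite Ex. simpl.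
  have := kap_kap N y. unfold kap at 2. fold w. simpl. auto.
Qed.

Definition maxl (L : list nat) : nat := List.fold_right maxn 0 L.

Lemma maxl_ge L y : List.In y L -> y <= maxl L.
Proof.
induction L as [|a L IH]; simpl. tauto. intros [->|H].
- apply leq_maxl.
- apply: leq_trans (IH H) _. apply leq_maxr.
Qed.

Definition rcv (c : clause) (xi : subst) : list nat :=
  avars (asubst xi (chead c)) ++ pgvars (psubst xi (cbody c)).

Lemma rcvars_rcv d : rcvars d = rcv (st_clause d) (st_ren d).
Proof. reflexivity. Qed.

Lemma rcv_kap c xi N y : (forall z, List.In z (rcv c xi) -> z < N) ->
  List.In y (rcv c (fun x => tsubst (kap N) (xi x))) -> exists z, List.In z (rcv c xi) /\ y = z + N.
Proof.
intros HN Hy. unfold rcv in *.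
rewrite -(asubst_comp xi (kap N)) -(psubst_comp xi (kap N)) in Hy.
apply List.in_app_or in Hy as [Hy|Hy].
- apply avars_asubst in Hy as [z [Hz Hy]].
  have Hz' : List.In z (avars (asubst xi (chead c)) ++ pgvars (psubst xi (cbody c))) by apply List.in_app_iff; auto.
  rewrite kap_lt in Hy; [|auto]. destruct Hy as [<-|[]]. eauto.
- apply pgvars_psubst in Hy as [z [Hz Hy]].
  have Hz' : List.In z (avars (asubst xi (chead c)) ++ pgvars (psubst xi (cbody c))) by apply List.in_app_iff; auto.
  rewrite kap_lt in Hy; [|auto]. destruct Hy as [<-|[]]. eauto.
Qed.

Lemma build_step (d : step) a p K Hk psi rho rhos pis xi' chi al :
  is_step d -> st_goal d = (a, p) :: K ->
  psum K (pshift (st_shift d) (psubst (st_ren d) (cbody (st_clause d)))) Hk ->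
  shifting rho -> shifting rhos -> shifting pis -> renaming xi' ->
  disjointL (pgvars ((asubst psi a, rho p) :: pshift rho (psubst psi K))) (rcv (st_clause d) xi') ->
  psubst chi K = psubst psi K ->
  psubst chi (psubst (st_ren d) (cbody (st_clause d))) = psubst xi' (cbody (st_clause d)) ->
  List.map rhos (prios K) = List.map rho (prios K) ->
  List.map (fun q => rhos (st_shift d q)) (prios (cbody (st_clause d))) = List.map pis (prios (cbody (st_clause d))) ->
  no_common_prio (pshift rho (psubst psi K)) (pshift pis (psubst xi' (cbody (st_clause d)))) ->
  idempotent al -> relevant al (asubst psi a) (asubst xi' (chead (st_clause d))) ->
  mgu al (asubst psi a) (asubst xi' (chead (st_clause d))) ->
  is_step (Step ((asubst psi a, rho p) :: pshift rho (psubst psi K)) (st_clause d) xi' al pis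
                (psubst al (pshift rhos (psubst chi Hk)))).
Proof.
intros Hd Hg [P1 [P2 [P3 [P4 P5]]]] Srho Srhos Spis Rxi Hdis HchiK HchiB Hrhos Hpis Hnc Hid Hrel Hmgu.
destruct Hd as [a0 [p0 [F0 [Hg0 [Wg [Wb _]]]]]].
set B := cbody (st_clause d).
exists (asubst psi a), (rho p), (pshift rho (psubst psi K)). simpl.
split; [reflexivity|]. split.
{ change ((asubst psi a, rho p) :: pshift rho (psubst psi K)) with (pshift rho (psubst psi ((a, p) :: K))).
  apply wf_pshift. exact (proj1 Srho). apply wf_psubst. rewrite -Hg. exact Wg. }
split; [exact Wb|]. split; [exact Rxi|]. split; [exact Hdis|]. split; [exact Hid|].
split; [exact Hrel|]. split; [exact Hmgu|]. split; [exact Spis|].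
exists (pshift rhos (psubst chi Hk)). split; [|reflexivity].
have WK : wf_pgoal K by apply (wf_tail (u := (a, p))); rewrite -Hg.
split; [|split; [|split; [|split]]].
- apply wf_pshift. exact (proj1 Srho). apply wf_psubst; auto.
- apply wf_pshift. exact (proj1 Spis). apply wf_psubst; auto.
- exact Hnc.
- apply wf_pshift. exact (proj1 Srhos). apply wf_psubst; auto.
- apply Permutation_map with (f := fun u => (asubst chi u.1, rhos u.2)) in P5.
  rewrite List.map_app -!pshift_psubst_map in P5. eapply Permutation_trans; [|exact P5].
  apply Permutation_app.
  + rewrite HchiK. have -> : pshift rhos (psubst psi K) = pshift rho (psubst psi K); [|apply Permutation_refl].
    apply pshift_ext. by rewrite prios_psubst.
  + rewrite -pshift_psubst HchiB pshift_comp.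
    have -> : pshift (fun q => rhos (st_shift d q)) (psubst xi' B) = pshift pis (psubst xi' B); [|apply Permutation_refl].
    apply pshift_ext. by rewrite prios_psubst.
Qed.

Lemma shifting_id : shifting id.
Proof. split. by []. exists id; by []. Qed.

Lemma shifting_comp f g : shifting f -> shifting g -> shifting (fun q => f (g q)).
Proof.
intros [F1 F2] [G1 G2]. split.
- intros x y H. apply F1, G1, H.
- exact (bij_comp F2 G2).
Qed.

Lemma same_lowering d1 d2 : is_step d1 -> is_step d2 -> st_goal d1 = st_goal d2 ->
  st_clause d1 = st_clause d2 -> st_shift d1 = st_shift d2 -> cong_lowering d1 d2 nil.
Proof.
intros H1 H2 Eg Ec Es. have H1' := H1. destruct H1' as [a [p [F [Hg [Wg _]]]]].
exists sid, id, F. split.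
- split; [auto|split; [auto|split; [auto|split; [exact shifting_id|]]]].
  exists a, p, F. split; auto. split.
  + rewrite pshift_id psubst_sid. split; [|split; [|split; [|split]]].
    * apply (wf_tail (u := (a, p))); rewrite -Hg; auto.
    * by [].
    * intros q _ [].
    * apply (wf_tail (u := (a, p))); rewrite -Hg; auto.
    * rewrite cats0. apply Permutation_refl.
  + rewrite -Eg Hg asubst_sid. reflexivity.
- exists id. split; [exact shifting_id|]. rewrite !pshift_id Es. split; reflexivity.
Qed.

Lemma same_mutual d1 d2 : is_step d1 -> is_step d2 -> st_goal d1 = st_goal d2 ->
  st_clause d1 = st_clause d2 -> st_shift d1 = st_shift d2 -> mutual_cong_lowering d1 d2.
Proof.
intros H1 H2 Eg Ec Es. split; exists nil; apply same_lowering; auto.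
Qed.

Lemma nc_prios F1 F2 G1 G2 : prios F1 = prios F2 -> prios G1 = prios G2 ->
  no_common_prio F1 G1 -> no_common_prio F2 G2.
Proof. intros E1 E2 H q. rewrite -E1 -E2. apply H. Qed.

Lemma memT (x : nat) l : List.In x l -> (x \in l) = true.
Proof. intros H; apply In_mem; auto. Qed.

Lemma memF (x : nat) l : ~ List.In x l -> (x \in l) = false.
Proof. intros H; apply/negP; intros H'; apply H; apply In_mem; auto. Qed.

Lemma ren_var xi x : renaming xi -> exists y, xi x = Var y.
Proof. intros [R _]; auto. Qed.

Lemma main (S : step -> Prop) (phi : subst) : si_scheduling_rule S ->
  forall ds G G' psi rho delta seen,
  List.Forall is_step ds -> via S ds -> chain G ds -> shifting rho ->
  G' = pshift rho (psubst psi G) ->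
  (forall v, List.In v (pgvars G) -> tsubst delta (psi v) = tsubst phi (composed_mgu ds v)) ->
  exists ds', length ds' = length ds /\ List.Forall is_step ds' /\ via S ds' /\ chain G' ds' /\
    fresh_ok seen ds' /\ template ds' = template ds.
Proof.
intros [[Sstep [Scompl Sclos]] Sind].
induction ds as [|dk rest IH]; intros G G0' psi rho delta seen Fs Vs Ch Srho HG' Hinv.
{ exists nil. simpl. split; [auto|split; [constructor|split; [constructor|auto]]]. }
inversion_clear Fs as [|? ? Hdk Fs']. inversion_clear Vs as [|? ? Sdk Vs'].
destruct Ch as [Ch1 Ch2].
have Hdk' := Hdk.
destruct Hdk' as [a [p [K [Hg [Wg [Wb [Rxi [Dis [Idk [Relk [Mguk [Spk [Hk [Psk Resk]]]]]]]]]]]]]].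
have HG : G = (a, p) :: K by rewrite -Ch1 Hg.
subst G.
set (c := st_clause dk) in *. set (h := chead c) in *. set (B := cbody c) in *. set (xi := st_ren dk) in *.
set (thk := st_mgu dk) in *. set (pik := st_shift dk) in *.
set G' := (asubst psi a, rho p) :: pshift rho (psubst psi K).
have EG' : pshift rho (psubst psi ((a, p) :: K)) = G' by reflexivity.
subst G0'. rewrite Hg EG'. rewrite Hg in Hinv.
set N := (maxl (seen ++ pgvars G' ++ rcvars dk)).+1.
have HN : forall z, List.In z (seen ++ pgvars G' ++ rcvars dk) -> z < N.
{ intros z Hz. have := maxl_ge Hz. unfold N. lia. }
have HNseen : forall z, List.In z seen -> z < N.
{ intros z Hz; apply HN; apply List.in_app_iff; auto. }
have HNG' : forall z, List.In z (pgvars G') -> z < N.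
{ intros z Hz; apply HN; apply List.in_app_iff; right; apply List.in_app_iff; auto. }
have HNrc : forall z, List.In z (rcvars dk) -> z < N.
{ intros z Hz; apply HN; apply List.in_app_iff; right; apply List.in_app_iff; auto. }
have Hrc_notG : forall z, List.In z (rcvars dk) -> ~ List.In z (pgvars ((a, p) :: K)).
{ intros z Hz HzG. rewrite Hg in Dis. exact (Dis z HzG Hz). }
set xi' := fun x => tsubst (kap N) (xi x).
have Rxi' : renaming xi' by apply renaming_comp.
have Hrc' : forall y, List.In y (rcv c xi') -> N <= y.
{ intros y Hy. destruct (rcv_kap (c := c) (xi := xi) (N := N) HNrc Hy) as [z [_ ->]]. lia. }
set chi := fun v => if v \in pgvars ((a, p) :: K) then psi v else kap N v.
set Th := fun v => tsubst phi (composed_mgu (dk :: rest) v).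
set Th' := fun v => tsubst phi (composed_mgu rest v).
have ThE : forall v, Th v = tsubst Th' (thk v).
{ intros v. unfold Th, Th'. simpl. unfold scomp. rewrite tsubst_comp. reflexivity. }
set s := fun v => if v \in pgvars G' then delta v else tsubst Th (kap N v).
have Hpsi_vars : forall x w, List.In x (pgvars ((a, p) :: K)) -> List.In w (tvars (psi x)) -> List.In w (pgvars G').
{ intros x w Hx Hw. rewrite -EG' pgvars_pshift. apply pgvars_psubst. eauto. }
have Hs1 : forall x, List.In x (pgvars ((a, p) :: K)) -> tsubst s (psi x) = Th x.
{ intros x Hx. transitivity (tsubst delta (psi x)); [|exact (Hinv x Hx)]. apply tsubst_ext. intros w Hw. unfold s. rewrite memT //. eauto. }
have Hs2 : forall y, y < N -> s (y + N) = Th y.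
{ intros y Hy. unfold s. rewrite memF. rewrite kap_back //. intros H'. have := HNG' _ H'. lia. }
have Hxi_h : forall x, List.In x (avars h) -> exists y, xi x = Var y /\ List.In y (rcvars dk).
{ intros x Hx. destruct (ren_var x Rxi) as [y Ey]. exists y; split; auto.
  rewrite rcvars_rcv. apply List.in_app_iff; left. apply avars_asubst. exists x; split; auto. fold xi. rewrite Ey; simpl; auto. }
have Hxi_B : forall x, List.In x (pgvars B) -> exists y, xi x = Var y /\ List.In y (rcvars dk).
{ intros x Hx. destruct (ren_var x Rxi) as [y Ey]. exists y; split; auto.
  rewrite rcvars_rcv. apply List.in_app_iff; right. apply pgvars_psubst. exists x; split; auto. fold xi. rewrite Ey; simpl; auto. }
have Hkey : forall x y, xi x = Var y -> List.In y (rcvars dk) -> xi' x = Var (y + N).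
{ intros x y Ey Hy. unfold xi'. rewrite Ey. simpl. apply kap_lt. auto. }
have Hunif : unifier s (asubst psi a) (asubst xi' h).
{ unfold unifier. rewrite !asubst_comp.
  transitivity (asubst Th a).
  - apply asubst_ext. intros x Hx. unfold scomp. apply Hs1. apply pgvars_cons; left; auto.
  - transitivity (asubst (scomp xi Th) h).
    + transitivity (asubst Th' (asubst thk a)).
      * rewrite asubst_comp. apply asubst_ext; intros x _; unfold scomp; apply ThE.
      * rewrite (proj1 Mguk). rewrite !asubst_comp. apply asubst_ext. intros x _. unfold scomp.
        apply tsubst_ext. intros z _. symmetry; apply ThE.
    + apply asubst_ext. intros x Hx. destruct (Hxi_h x Hx) as [y [Ey Hy]]. unfold scomp.
      rewrite Ey (Hkey x y Ey Hy). simpl. rewrite Hs2 //. auto. }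
destruct (atom_mgu Hunif) as [al [Hmgu [Hid Hrel]]].
have WK : wf_pgoal K by apply (wf_tail (u := (a, p))); rewrite -Hg.
have WK' : wf_pgoal (pshift rho (psubst psi K)) by apply wf_pshift; [exact (proj1 Srho)|apply wf_psubst].
have Psk' := Psk. destruct Psk' as [P1 [P2 [P3 [P4 P5]]]].
have HchiK : psubst chi K = psubst psi K.
{ apply psubst_ext. intros x Hx. unfold chi. rewrite memT //. apply pgvars_cons; auto. }
have Hchia : asubst chi a = asubst psi a.
{ apply asubst_ext. intros x Hx. unfold chi. rewrite memT //. apply pgvars_cons; auto. }
have HchiB : psubst chi (psubst xi B) = psubst xi' B.
{ rewrite psubst_comp. apply psubst_ext. intros x Hx. unfold scomp.
  destruct (Hxi_B x Hx) as [y [Ey Hy]]. rewrite Ey (Hkey x y Ey Hy). simpl. unfold chi.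
  rewrite memF. apply kap_lt; auto. apply Hrc_notG; auto. }
have Hchih : asubst chi (asubst xi h) = asubst xi' h.
{ rewrite asubst_comp. apply asubst_ext. intros x Hx. unfold scomp.
  destruct (Hxi_h x Hx) as [y [Ey Hy]]. rewrite Ey (Hkey x y Ey Hy). simpl. unfold chi.
  rewrite memF. apply kap_lt; auto. apply Hrc_notG; auto. }
have Hdis : disjointL (pgvars G') (rcv c xi').
{ intros x Hx Hx2. have := HNG' x Hx. have := Hrc' x Hx2. lia. }
have Hd1 : is_step (Step G' c xi' al (fun q => rho (pik q)) (psubst al (pshift rho (psubst chi Hk)))).
{ apply: (build_step Hdk Hg Psk Srho Srho (shifting_comp Srho Spk) Rxi' Hdis HchiK HchiB _ _ _ Hid Hrel Hmgu).
  - reflexivity.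
  - reflexivity.
  - rewrite -(pshift_comp rho pik). apply nc_map. exact (proj1 Srho).
    eapply nc_prios; [| |exact P3]. by rewrite prios_psubst. by rewrite !prios_pshift !prios_psubst. }
destruct (Scompl _ Hd1) as [d2 [S2 [Eg2 Ec2]]]. simpl in Eg2, Ec2.
have Hd2 := Sstep d2 S2.
have Hd2' := Hd2.
destruct Hd2' as [a2 [p2 [F2 [Hg2 [Wg2 [Wb2 [_ [_ [_ [_ [_ [Sp2 [H2 [Ps2 _]]]]]]]]]]]]]].
rewrite Eg2 in Hg2. unfold G' in Hg2. injection Hg2 as Ea2 Ep2 EF2. subst F2.
rewrite Ec2 in Ps2. destruct Ps2 as [_ [_ [Nc2 _]]].
have Hlow : lowering dk d2 nil.
{ exists psi, rho, K. split; [exact Hdk|split; [exact Hd2|split; [by rewrite Ec2|split; [exact Srho|]]]].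
  exists a, p, (pshift rho (psubst psi K)). split; [exact Hg|split].
  - split; [exact WK'|split; [by []|split; [intros q _ []|split; [exact WK'|rewrite cats0; apply Permutation_refl]]]].
  - rewrite Eg2. reflexivity. }
destruct (Sind dk d2 nil Sdk S2 Hlow) as [lam' [sig' [K0 [[_ [_ [_ [_ [a0 [p0 [KX [Hg0 [Hps Hgd2]]]]]]]]] [rh [Srh [E1 E2]]]]]]].
rewrite Hg in Hg0. injection Hg0 as Ea0 Ep0 EK0. subst a0 p0 K0.
rewrite Eg2 in Hgd2. unfold G' in Hgd2. injection Hgd2 as _ _ EKX. subst KX.
destruct Hps as [Q1 [_ [_ [Q4 Q5]]]]. rewrite cats0 in Q5.
have Psig : List.map sig' (prios K) = List.map rho (prios K).
{ have := wf_perm_prios Q1 Q4 Q5. by rewrite !prios_pshift !prios_psubst. }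
have Prh : List.map rh (prios K) = List.map sig' (prios K) by rewrite -!prios_pshift E1.
have Pbody : List.map (fun q => rh (pik q)) (prios B) = List.map (st_shift d2) (prios B).
{ have := f_equal prios E2. rewrite !prios_pshift List.map_map. auto. }
have Hd3 : is_step (Step G' c xi' al (st_shift d2) (psubst al (pshift rh (psubst chi Hk)))).
{ apply: (build_step Hdk Hg Psk Srho Srh Sp2 Rxi' Hdis HchiK HchiB _ _ _ Hid Hrel Hmgu).
  - by rewrite Prh Psig.
  - exact Pbody.
  - eapply nc_prios; [| |exact Nc2]. by []. by rewrite !prios_pshift !prios_psubst. }
have S3 : S (Step G' c xi' al (st_shift d2) (psubst al (pshift rh (psubst chi Hk)))).
{ apply (Sclos d2 _ S2 Hd3). apply same_mutual; auto. }
have Hunif2 : unifier (scomp chi al) a (asubst xi h).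
{ unfold unifier. rewrite -!asubst_comp Hchia Hchih. exact (proj1 Hmgu). }
destruct ((proj2 Mguk) _ Hunif2) as [psi1 Hpsi1].
destruct ((proj2 Hmgu) s Hunif) as [e He].
destruct (IH (psubst thk Hk) (psubst al (pshift rh (psubst chi Hk))) psi1 rh e
            (seen ++ rcv c xi') Fs' Vs') as [ds' [L1 [L2 [L3 [L4 [L5 L6]]]]]].
- by rewrite -Resk.
- exact Srh.
- rewrite -pshift_psubst !psubst_comp. f_equal. apply psubst_ext. intros x _. apply Hpsi1.
- intros v Hv. apply pgvars_psubst in Hv as [x [Hx Hvx]].
  have C : tsubst (scomp psi1 e) (thk x) = tsubst Th' (thk x).
  { rewrite -tsubst_comp -Hpsi1 -ThE. unfold scomp.
    rewrite tsubst_comp. transitivity (tsubst s (chi x)).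
    { apply tsubst_ext; intros z _; unfold scomp; symmetry; apply He. }
    unfold chi. case: ifP => Hxin.
    - apply Hs1. apply In_mem; auto.
    - have Hx' : List.In x (pgvars (K ++ pshift pik (psubst xi B))).
      { apply (pgvars_perm (G := Hk)); auto. apply Permutation_sym; auto. }
      apply pgvars_app in Hx' as [Hx'|Hx'].
      + exfalso. rewrite memT in Hxin; [discriminate|]. apply pgvars_cons; auto.
      + rewrite pgvars_pshift in Hx'.
        have Hxr : List.In x (rcvars dk) by rewrite rcvars_rcv; apply List.in_app_iff; right.
        rewrite kap_lt; [|auto]. simpl. apply Hs2; auto. }
  have := tsubst_eq_vars C Hvx. unfold scomp. auto.
- exists (Step G' c xi' al (st_shift d2) (psubst al (pshift rh (psubst chi Hk))) :: ds').
  simpl. split; [by rewrite L1|]. split; [constructor; auto|]. split; [constructor; auto|].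
  split; [split; [reflexivity|exact L4]|]. split; [split; [|exact L5]|].
  + intros y Hy Hs. have := Hrc' y Hy. have := HNseen y Hs. lia.
  + f_equal. exact L6.
Qed.

Theorem lemmaB1 (S : step -> Prop) (G : pgoal) (phi : subst) (ds : list step) :
  si_scheduling_rule S ->
  pderivation G ds -> via S ds ->
  exists ds' : list step,
    pderivation (psubst phi (psubst (composed_mgu ds) G)) ds' /\
    via S ds' /\ template ds' = template ds.
Proof.
intros HS [Hne [Fs [Ch Fr]]] Vs.
destruct (@main S phi HS ds G (psubst phi (psubst (composed_mgu ds) G)) (scomp (composed_mgu ds) phi)
            id sid (pgvars (psubst phi (psubst (composed_mgu ds) G))) Fs Vs Ch shifting_id)
  as [ds' [L1 [L2 [L3 [L4 [L5 L6]]]]]].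
- by rewrite pshift_id psubst_comp.
- intros v _. rewrite tsubst_sid. reflexivity.
- exists ds'. split; [|auto]. split; [|auto].
  destruct ds'; destruct ds; simpl in L1; congruence.
Qed.
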